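(* Let $F$ be a perfect field of characteristic $\neq 2$ and let $(V,q)$ be a nondegenerate quadratic space over $F$ with $\dim V=n=2m+1$, $m$ odd, of maximal Witt index, with basis $\{e_0,e_1,f_1,\ldots,e_m,f_m\}$ where $q(e_0)\neq0$, $e_0\perp e_i,f_i$, $B(e_i,f_j)=\delta_{ij}$, $B(e_i,e_j)=0=B(f_i,f_j)$. Let $t$ be an element of $T=\{\lambda_0\prod_{i=1}^m(e_i+f_i)(e_i+\lambda_if_i):\lambda_i\in F^*\}\subseteq\Gamma^+(V,q)$. Then there exists $s\in\Gamma^+(V,q)$ such that $sts^{-1}=N(t)t^{-1}$, $N(s)=1$ and $s^2=(-1)^{m(m+1)/2}$.
   Context: $B(x,y)=q(x+y)-q(x)-q(y)$. $C(V,q)=T(V)/\langle x\otimes x-q(x)\cdot1\rangle=C_0\oplus C_1$, $\Gamma(V,q)=\{u\in C(V,q)^\times: uVu^{-1}\subseteq V\}$, $\Gamma^+(V,q)=\Gamma(V,q)\cap C_0(V,q)$. With $\tau$ the anti-involution reversing products of vectors, $N(u)=\tau(u)u$. *)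

(* Defs.v *)
From HB Require Import structures.
From mathcomp Require Import all_boot all_order all_algebra.
Set Implicit Arguments. Unset Strict Implicit. Unset Printing Implicit Defensive.
Import Order.TTheory GRing.Theory.
Local Open Scope ring_scope.

Definition perfect_field (F : fieldType) : Prop :=
  forall p : nat, p \in [pchar F] -> forall x : F, exists y : F, y ^+ p = x.

Section Quad.
Variables (F : fieldType) (V : lmodType F).

Definition polar (q : V -> F) (x y : V) : F := q (x + y) - q x - q y.

Definition quadratic_form (q : V -> F) : Prop :=
  (forall (a : F) (x : V), q (a *: x) = a ^+ 2 * q x) /\
  (forall (x y z : V) (a : F), polar q x (a *: y + z) = a * polar q x y + polar q x z).

Definition qnondegenerate (q : V -> F) : Prop :=
  forall x : V, (forall y : V, polar q x y = 0) -> x = 0.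

Definition is_clifford_algebra (q : V -> F) (A : unitAlgType F) (iota : {linear V -> A})
  : Prop :=
  (forall v : V, iota v * iota v = (q v)%:A) /\
  (forall (B : algType F) (g : {linear V -> B}),
      (forall v : V, g v * g v = (q v)%:A) ->
      exists h : {lrmorphism A -> B},
        (forall v, h (iota v) = g v) /\
        (forall h' : {lrmorphism A -> B}, (forall v, h' (iota v) = g v) -> h' =1 h)).

Definition is_reversion (A : unitAlgType F) (iota : {linear V -> A}) (tau : A -> A)
  : Prop :=
  [/\ forall (a : F) (x y : A), tau (a *: x + y) = a *: tau x + tau y,
      tau 1 = 1,
      forall x y : A, tau (x * y) = tau y * tau x
    & forall v : V, tau (iota v) = iota v].

Definition clifford_even (A : unitAlgType F) (iota : {linear V -> A}) (x : A) : Prop :=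
  exists (k : nat) (c : 'I_k -> F) (w : 'I_k -> seq V),
    (forall j, ~~ odd (size (w j))) /\
    x = \sum_(j < k) c j *: \prod_(v <- w j) iota v.

Definition clifford_group (A : unitAlgType F) (iota : {linear V -> A}) (u : A) : Prop :=
  u \is a GRing.unit /\ forall v : V, exists w : V, u * iota v * u^-1 = iota w.

Definition clifford_group_even (A : unitAlgType F) (iota : {linear V -> A}) (u : A)
  : Prop := clifford_group iota u /\ clifford_even iota u.

Definition spin_norm (A : unitAlgType F) (tau : A -> A) (u : A) : A := tau u * u.

End Quad.

(* Main.v *)
From HB Require Import structures.
From mathcomp Require Import all_boot all_order all_algebra.
Set Implicit Arguments. Unset Strict Implicit. Unset Printing Implicit Defensive.
Import Order.TTheory GRing.Theory.
Local Open Scope ring_scope.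

Section Gen.
Variable R : unitRingType.

Lemma inv_eq (x y : R) : x \is a GRing.unit -> x * y = 1 -> x^-1 = y.
Proof. by move=> ux xy; rewrite -[LHS]mulr1 -xy mulrA mulVr // mul1r. Qed.

Lemma prod_conj (I : Type) (r : seq I) (s : R) (P Q : I -> R) :
  (forall i, s * P i = Q i * s) ->
  s * \prod_(i <- r) P i = \prod_(i <- r) Q i * s.
Proof.
move=> h; elim: r => [|a r IH]; first by rewrite !big_nil mulr1 mul1r.
by rewrite !big_cons mulrA h -!mulrA IH.
Qed.

Lemma prod_rev_comm (I : eqType) (r : seq I) (Q : I -> R) :
  uniq r -> (forall i j, i != j -> Q i * Q j = Q j * Q i) ->
  \prod_(i <- rev r) Q i = \prod_(i <- r) Q i.
Proof.
move=> + h; elim: r => [|a r IH] //= /andP[ar ur].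
rewrite rev_cons big_rcons big_cons IH //.
have : GRing.comm (Q a) (\prod_(i <- r) Q i).
  rewrite big_seq; apply: commr_prod => i ir; rewrite /GRing.comm h //.
  by apply: contraNneq ar => ->.
by rewrite /GRing.comm => ->.
Qed.

Lemma prod_swap (I : eqType) (r : seq I) (i : I) (W P Q : I -> R) :
  uniq r -> i \in r ->
  (forall j, j != i -> W j * P i = P i * W j /\ W j * Q i = Q i * W j) ->
  W i * P i = Q i * W i ->
  \prod_(j <- r) W j * P i = Q i * \prod_(j <- r) W j.
Proof.
move=> + + hc hi; elim: r => [|a r IH] //= /andP[ar ur].
rewrite inE big_cons => /orP[/eqP ai|ir].
  subst a.
  have : GRing.comm (P i) (\prod_(j <- r) W j).
    rewrite big_seq; apply: commr_prod => j jr.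
    have ji : j != i by apply: contraNneq ar => <-.
    by rewrite /GRing.comm (hc j ji).1.
  by rewrite /GRing.comm -mulrA => <-; rewrite mulrA hi mulrA.
have aI : a != i by apply: contraNneq ar => ->.
by rewrite -mulrA IH // !mulrA (hc a aI).2.
Qed.

Lemma prod_unit (I : Type) (r : seq I) (X : I -> R) :
  (forall i, X i \is a GRing.unit) -> \prod_(i <- r) X i \is a GRing.unit.
Proof.
move=> h; elim: r => [|a r IH]; first by rewrite big_nil unitr1.
by rewrite big_cons unitrMl.
Qed.

End Gen.
Require Import Defs.
From mathcomp Require Import ring.
Set Implicit Arguments. Unset Strict Implicit. Unset Printing Implicit Defensive.
Import Order.TTheory GRing.Theory.
Local Open Scope ring_scope.

Lemma zm (M : zmodType) (a b c d : M) : b + c = a + b + (c + d) - a - d.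
Proof. by apply/eqP; rewrite eq_sym !subr_eq; apply/eqP; rewrite [RHS]addrC !addrA. Qed.

Section Cl.
Variables (F : fieldType) (V : lmodType F) (q : V -> F) (hq : quadratic_form q).
Variables (A : unitAlgType F) (iota : {linear V -> A}).
Hypothesis hsq : forall v, iota v * iota v = (q v)%:A.

Lemma q0 : q 0 = 0.
Proof. by rewrite -(scale0r (0 : V)) hq.1 expr2 !mul0r. Qed.

Lemma polarC x y : polar q x y = polar q y x.
Proof. by rewrite /polar [y + x]addrC addrAC. Qed.

Lemma polar0r x : polar q x 0 = 0.
Proof. by rewrite /polar addr0 q0 subr0 subrr. Qed.

Lemma polarZr x a y : polar q x (a *: y) = a * polar q x y.
Proof. by have := hq.2 x y 0 a; rewrite addr0 polar0r addr0. Qed.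

Lemma polarDr x y z : polar q x (y + z) = polar q x y + polar q x z.
Proof. by have := hq.2 x y z 1; rewrite scale1r mul1r. Qed.

Lemma polarZl x a y : polar q (a *: y) x = a * polar q y x.
Proof. by rewrite polarC polarZr polarC. Qed.

Lemma polarDl x y z : polar q (y + z) x = polar q y x + polar q z x.
Proof. by rewrite polarC polarDr !(polarC x). Qed.

Lemma qD x y : q (x + y) = polar q x y + q x + q y.
Proof. by rewrite /polar addrAC !subrK. Qed.

Lemma q_iso x : (2%:R : F) != 0 -> polar q x x = 0 -> q x = 0.
Proof.
move=> h2 H; have e : x + x = 2%:R *: x by rewrite scaler_nat mulr2n.
move: H; rewrite /polar e hq.1 => H.
have : 2%:R * q x = 0 by rewrite -H; ring.
by move/eqP; rewrite mulf_eq0 (negbTE h2) => /eqP.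
Qed.

Lemma anti x y : iota x * iota y + iota y * iota x = (polar q x y)%:A.
Proof.
have := hsq (x + y); rewrite linearD mulrDl !mulrDr !hsq => H.
rewrite /polar !scalerBl -H.
exact: zm.
Qed.

Lemma anti0 x y : polar q x y = 0 -> iota x * iota y = - (iota y * iota x).
Proof. by move=> h; apply/eqP; rewrite -addr_eq0 anti h scale0r. Qed.

Lemma comm2 w x y : polar q w x = 0 -> polar q w y = 0 ->
  iota w * (iota x * iota y) = iota x * iota y * iota w.
Proof.
by move=> hx hy; rewrite mulrA (anti0 hx) mulNr -[in LHS]mulrA (anti0 hy) mulrN opprK !mulrA.
Qed.

Lemma comm22 a b c d : polar q a c = 0 -> polar q a d = 0 ->
  polar q b c = 0 -> polar q b d = 0 ->
  iota a * iota b * (iota c * iota d) = iota c * iota d * (iota a * iota b).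
Proof.
by move=> h1 h2 h3 h4; rewrite -mulrA comm2 // mulrA comm2 // !mulrA.
Qed.

Lemma iota_inv a : q a != 0 ->
  iota a \is a GRing.unit /\ (iota a)^-1 = (q a)^-1 *: iota a.
Proof.
move=> ha.
have h1 : iota a * ((q a)^-1 *: iota a) = 1.
  by rewrite -scalerAr hsq scalerA mulVf // scale1r.
have h2 : ((q a)^-1 *: iota a) * iota a = 1.
  by rewrite -scalerAl hsq scalerA mulVf // scale1r.
have u : iota a \is a GRing.unit by apply/unitrP; exists ((q a)^-1 *: iota a).
by split => //; apply: inv_eq.
Qed.

Lemma iota_unit a : q a != 0 -> iota a \is a GRing.unit.
Proof. by move=> h; case: (iota_inv h). Qed.

Lemma iota_conj a x : q a != 0 ->
  iota a * iota x * (iota a)^-1 = iota ((q a)^-1 * polar q a x *: a - x).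
Proof.
move=> ha; rewrite (iota_inv ha).2 -scalerAr.
have e : iota a * iota x = (polar q a x)%:A - iota x * iota a.
  by rewrite -anti addrK.
rewrite e mulrBl -mulrA hsq mulr_algl mulr_algr scalerBr !scalerA mulVf //.
by rewrite scale1r linearB linearZ mulrC.
Qed.

Lemma prodP_group (ws : seq V) : all (fun v => q v != 0) ws ->
  (\prod_(v <- ws) iota v) \is a GRing.unit /\
  forall x, exists y, (\prod_(v <- ws) iota v) * iota x * (\prod_(v <- ws) iota v)^-1 = iota y.
Proof.
elim: ws => [|a ws IH]; first by rewrite big_nil; split => [|x]; [exact: unitr1 | exists x; rewrite invr1 mulr1 mul1r].
move=> /andP[ha /IH [u c]]; have [ua _] := iota_inv ha.
rewrite big_cons; split; first by rewrite unitrMl.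
move=> x; have [y hy] := c x; exists ((q a)^-1 * polar q a y *: a - y).
by rewrite invrM // !mulrA -(mulrA (iota a) _ (iota x)) -(mulrA (iota a)) hy iota_conj.
Qed.

End Cl.

Section Tau.
Variables (F : fieldType) (V : lmodType F) (q : V -> F) (hq : quadratic_form q).
Variables (A : unitAlgType F) (iota : {linear V -> A}).
Hypothesis hsq : forall v, iota v * iota v = (q v)%:A.
Variable tau : A -> A.
Hypothesis htau : is_reversion iota tau.

Lemma tau0 : tau 0 = 0.
Proof.
case: htau => hl _ _ _; have := hl 1 0 0; rewrite !scale1r addr0 => H.
by apply: (@addrI _ (tau 0)); rewrite addr0 -H.
Qed.

Lemma tauZ a x : tau (a *: x) = a *: tau x.
Proof. by case: htau => hl _ _ _; have := hl a x 0; rewrite !addr0 tau0 addr0. Qed.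

Lemma tau_big (I : Type) (r : seq I) (X : I -> A) :
  tau (\prod_(i <- r) X i) = \prod_(i <- rev r) tau (X i).
Proof.
case: htau => _ h1 hM _; elim: r => [|a r IH]; first by rewrite !big_nil.
by rewrite big_cons hM IH rev_cons big_rcons.
Qed.

Lemma tau_iota v : tau (iota v) = iota v.
Proof. by case: htau. Qed.

Lemma tauM x y : tau (x * y) = tau y * tau x.
Proof. by case: htau. Qed.

Lemma normP (ws : seq V) :
  tau (\prod_(v <- ws) iota v) * \prod_(v <- ws) iota v = (\prod_(v <- ws) q v)%:A.
Proof.
elim: ws => [|a ws IH]; first by rewrite !big_nil; case: htau => _ -> _ _; rewrite mulr1 scale1r.
rewrite !big_cons tauM tau_iota -mulrA (mulrA (iota a)) hsq mulr_algl -scalerAr IH.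
by rewrite scalerA.
Qed.

Lemma move_past (a : V) (ws : seq V) : all (fun v => polar q a v == 0) ws ->
  \prod_(v <- ws) iota v * iota a = ((-1) ^+ size ws) *: (iota a * \prod_(v <- ws) iota v).
Proof.
elim: ws => [|b ws IH]; first by rewrite big_nil expr0 scale1r mulr1 mul1r.
move=> /andP[/eqP hb /IH {}IH]; rewrite big_cons -mulrA IH -scalerAr [in LHS]mulrA.
rewrite (anti0 hsq (y := a)); last by rewrite polarC.
by rewrite mulNr -mulrA scalerN -scaleNr /= exprS mulN1r.
Qed.

Lemma sign_tau (ws : seq V) : pairwise (fun x y => polar q x y == 0) ws ->
  tau (\prod_(v <- ws) iota v) = ((-1) ^+ 'C(size ws, 2)) *: \prod_(v <- ws) iota v.
Proof.
elim: ws => [|a ws IH]; first by rewrite !big_nil bin0n expr0 scale1r; case: htau.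
rewrite pairwise_cons => /andP[ha /IH {}IH].
rewrite big_cons tauM tau_iota IH -scalerAl move_past // scalerA /= binS bin1 exprD.
by [].
Qed.

End Tau.

Lemma core (F : fieldType) (A : algType F) (E G : A) (b l : F) :
  E * E = 0 -> G * G = 0 ->
  (E + b *: G) * ((E + G) * (E + l *: G)) = (E + l *: G) * (E + G) * (E + b *: G).
Proof.
move=> hE hG.
have h1 : forall x, E * E * x = 0 by move=> x; rewrite hE mul0r.
have h2 : forall x, x * E * E = 0 by move=> x; rewrite -mulrA hE mulr0.
have h3 : forall x, G * G * x = 0 by move=> x; rewrite hG mul0r.
have h4 : forall x, x * G * G = 0 by move=> x; rewrite -mulrA hG mulr0.
rewrite !(mulrDl, mulrDr) -!scalerAl -!scalerAr !scalerA !mulrA.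
rewrite !(h1, h2, h3, h4) !(scaler0, add0r, addr0, scale0r).
by rewrite mulrC.
Qed.

Theorem corollary5p9
  (F : fieldType) (hperf : perfect_field F) (hchar : (2%:R : F) != 0)
  (V : vectType F) (q : V -> F) (hq : quadratic_form q) (hnd : qnondegenerate q)
  (m : nat) (hm : odd m)
  (e0 : V) (e f : 'I_m -> V)
  (hbasis : basis_of fullv (e0 :: [seq e i | i <- enum 'I_m] ++ [seq f i | i <- enum 'I_m]))
  (he0 : q e0 != 0)
  (he0e : forall i, polar q e0 (e i) = 0) (he0f : forall i, polar q e0 (f i) = 0)
  (hef : forall i j, polar q (e i) (f j) = (i == j)%:R)
  (hee : forall i j, polar q (e i) (e j) = 0) (hff : forall i j, polar q (f i) (f j) = 0)
  (A : unitAlgType F) (iota : {linear V -> A}) (hA : is_clifford_algebra q iota)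
  (tau : A -> A) (htau : is_reversion iota tau)
  (t : A)
  (ht : exists (l0 : F) (l : 'I_m -> F), l0 != 0 /\ (forall i, l i != 0) /\
          t = l0 *: \prod_(i < m) (iota (e i + f i) * iota (e i + l i *: f i))) :
  exists s : A,
    [/\ clifford_group_even iota s,
        s * t * s^-1 = spin_norm tau t * t^-1,
        spin_norm tau s = 1
      & s ^+ 2 = (-1) ^+ ((m * m.+1)./2)].
Proof.
have hsq := hA.1.
have qe : forall i, q (e i) = 0 := fun i => q_iso hq hchar (hee i i).
have qf : forall i, q (f i) = 0 := fun i => q_iso hq hchar (hff i i).
have qwb : forall i b, q (e i + b *: f i) = b.
  by move=> i b; rewrite qD polarZr // hef eqxx mulr1 qe hq.1 qf mulr0 !addr0.
have qef : forall i, q (e i + f i) = 1 by move=> i; have := qwb i 1; rewrite scale1r.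
have p0 : forall i b, polar q e0 (e i + b *: f i) = 0.
  by move=> i b; rewrite polarDr // polarZr // he0e he0f mulr0 addr0.
have p0' : forall i, polar q e0 (e i + f i) = 0.
  by move=> i; have := p0 i 1; rewrite scale1r.
have pij : forall i j b c, i != j -> polar q (e i + b *: f i) (e j + c *: f j) = 0.
  move=> i j b c ij; have ji : j != i by rewrite eq_sym.
  rewrite polarDl // !polarDr // polarZl // !polarZr // polarZl //.
  rewrite [polar q (f i) (e j)]polarC hee hff !hef (negbTE ij) (negbTE ji).
  by rewrite !mulr0 !addr0.
have pij1 : forall i j c, i != j -> polar q (e i + f i) (e j + c *: f j) = 0.
  by move=> i j c ij; have := pij i j 1 c ij; rewrite scale1r.
have pij2 : forall i j b, i != j -> polar q (e i + b *: f i) (e j + f j) = 0.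
  by move=> i j b ij; have := pij i j b 1 ij; rewrite scale1r.
have pij3 : forall i j, i != j -> polar q (e i + f i) (e j + f j) = 0.
  by move=> i j ij; have := pij i j 1 1 ij; rewrite !scale1r.
have [l0 [l [hl0 [hl ->]]]] := ht.
have m0 : (0 < m)%N by rewrite lt0n; apply: contraTneq hm => ->.
pose i0 : 'I_m := Ordinal m0.
pose bb := fun j : 'I_m => if j == i0 then (q e0)^-1 else 1.
pose w := fun j => e j + bb j *: f j.
pose ws := e0 :: [seq w j | j <- index_enum 'I_m].
have hall : all (fun v => q v != 0) ws.
  rewrite /= he0 /= all_map; apply/allP => j _; rewrite /= /w qwb /bb.
  by case: ifP => _; [rewrite invr_eq0 | exact: oner_neq0].
have hpw : pairwise (fun x y => polar q x y == 0) ws.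
  rewrite pairwise_cons all_map pairwise_map; apply/andP; split.
    by apply/allP => j _; rewrite /= /w p0.
  have := index_enum_uniq 'I_m; rewrite uniq_pairwise; apply: sub_pairwise.
  by move=> i j /= ij; rewrite /w pij.
have [hu hc] := prodP_group hsq hall.
have hN : spin_norm tau (\prod_(v <- ws) iota v) = 1.
  rewrite /spin_norm (normP hsq htau) big_cons big_map.
  under eq_bigr => j _ do rewrite /w qwb.
  rewrite (bigD1 i0) //= big1 => [|j /negbTE hj]; last by rewrite /bb hj.
  by rewrite /bb eqxx mulr1 mulfV // scale1r.
have hsg := sign_tau hsq htau hpw.
set s := \prod_(v <- ws) iota v in hu hc hN hsg *.
set T := l0 *: _.
pose P := fun i => iota (e i + f i) * iota (e i + l i *: f i).
pose Q := fun i => iota (e i + l i *: f i) * iota (e i + f i).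
have tu : T \is a GRing.unit.
  rewrite /T -mulr_algl unitrMl; last first.
    apply: prod_unit => i; rewrite unitrMl; first by apply: (iota_unit hsq); rewrite qef oner_neq0.
    by apply: (iota_unit hsq); rewrite qwb.
  apply/unitrP; exists (l0^-1)%:A; rewrite !mulr_algl !scalerA.
  by rewrite mulVf // mulfV // scale1r.
have htt : tau T = l0 *: \prod_(i < m) Q i.
  rewrite /T (tauZ htau) (tau_big htau) prod_rev_comm; last 2 first.
  - exact: index_enum_uniq.
  - by move=> i j ij; rewrite !(tauM htau) !(tau_iota htau) (comm22 hsq) // ?pij ?pij1 ?pij2 ?pij3.
  - by congr (_ *: _); apply: eq_bigr => i _; rewrite (tauM htau) !(tau_iota htau).
have hst : s * T = tau T * s.
  rewrite htt /T -scalerAr -scalerAl; congr (_ *: _).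
  apply: prod_conj => i.
  rewrite /s big_cons big_map -mulrA.
  rewrite (@prod_swap _ _ _ i (fun j => iota (w j)) P Q (index_enum_uniq _) (mem_index_enum _)).
  - rewrite mulrA (comm2 hsq) ?p0 ?p0' //.
    by rewrite -!mulrA.
  - move=> j ji; rewrite /P /Q; split; rewrite (comm2 hsq) // /w ?pij ?pij2 //.
  - rewrite /w /P /Q !linearD !linearZ /=; apply: core; rewrite hsq ?qe ?qf scale0r //.
exists s; split.
- split; first by split.
  exists 1%N, (fun _ => 1), (fun _ => ws); split.
    move=> _; rewrite /= size_map [index_enum _]unlock -enumT -cardT card_ord /=.
    by rewrite hm.
  by rewrite big_ord1 scale1r.
- by rewrite /spin_norm hst !mulrK.
- exact: hN.
have sz : size ws = m.+1.
  by rewrite /= size_map [index_enum _]unlock -enumT -cardT card_ord.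
move: hN; rewrite /spin_norm hsg -scalerAl => H.
set σ : F := (-1) ^+ _ in H.
have σσ : σ * σ = 1 by rewrite -expr2 sqrr_sign.
have e2 : s ^+ 2 = σ *: 1 by rewrite expr2 -[X in _ = _ *: X]H scalerA σσ scale1r.
rewrite e2 /σ sz bin2 /= mulnC.
by have := rmorph_sign (in_alg A) ((m * m.+1)./2); rewrite /=.
Qed.
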